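(* Let $X$ be a finite-dimensional real Banach space with a skipped 1-unconditional basis $(e_k)_{k=1}^{2N+1}$ and biorthogonal functionals $(e_k^* )_{k=1}^{2N+1}$. Suppose $\mathrm{ubc}(e^*_{2j-1})_{j=1}^{N+1}=\mu>1$. Then $\mathrm{ubc}(e_j^* )_{j=1}^{2N+1}\ge 1+2(\mu-1)$.
   Context: A basic sequence $(e_k)_{k=1}^N$ ($1\le N\le\infty$) is skipped $\lambda$-unconditional if whenever $0=m_0<m_1<\dots<m_n<\infty$ with $m_j-m_{j-1}\ge2$ for $1\le j\le n$, and $y_j\in[e_i]_{i=m_{j-1}+1}^{m_j-1}$ (spans taken only over indices $i\le N$), then $\|\sum_{j=1}^n\epsilon_jy_j\|\le\lambda\|\sum_{j=1}^ny_j\|$ for all signs $\epsilon_j=\pm1$. For a finite linearly independent sequence $(f_j)_{j\in A}$, $\mathrm{ubc}(f_j)_{j\in A}$ (unconditional basis constant) is the least $K$ such that $\|\sum_{j\in A}\epsilon_ja_jf_j\|\le K\|\sum_{j\in A}a_jf_j\|$ for all scalars $a_j$ and signs $\epsilon_j=\pm1$. *)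

(* Defs.v *)
From Stdlib Require Import Reals.
Open Scope R_scope.

(* A finite-dimensional space X with basis (e_k)_{k=1}^n is modelled, via the
   coordinate isomorphism, as R^n: a vector is a function [nat -> R] of which
   only the coordinates 1..n matter; e_k is the k-th unit vector and the
   biorthogonal functional e_k^star is the k-th coordinate. *)
Definition vec := nat -> R.

Fixpoint sumR (n : nat) (f : nat -> R) : R :=
  match n with
  | O => 0
  | S m => sumR m f + f (S m)
  end.

Definition vadd (x y : vec) : vec := fun k => x k + y k.
Definition vscale (c : R) (x : vec) : vec := fun k => c * x k.
Definition vsum (m : nat) (y : nat -> vec) : vec := fun k => sumR m (fun j => y j k).

Definition is_norm (n : nat) (nrm : vec -> R) : Prop :=
  (forall x y : vec, (forall k, (1 <= k <= n)%nat -> x k = y k) -> nrm x = nrm y) /\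
  (forall x : vec, nrm x = 0 -> forall k, (1 <= k <= n)%nat -> x k = 0) /\
  (forall (c : R) (x : vec), nrm (vscale c x) = Rabs c * nrm x) /\
  (forall x y : vec, nrm (vadd x y) <= nrm x + nrm y).

Definition is_sign (e : R) : Prop := e = 1 \/ e = -1.

Definition skipped_unconditional (n : nat) (nrm : vec -> R) (lam : R) : Prop :=
  forall (m : nat) (mm : nat -> nat) (y : nat -> vec) (eps : nat -> R),
    mm 0%nat = 0%nat ->
    (forall j, (1 <= j <= m)%nat -> (mm (j - 1)%nat + 2 <= mm j)%nat) ->
    (forall j, (1 <= j <= m)%nat -> forall i,
        ~ ((mm (j - 1)%nat < i)%nat /\ (i < mm j)%nat /\ (i <= n)%nat) -> y j i = 0) ->
    (forall j, (1 <= j <= m)%nat -> is_sign (eps j)) ->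
    nrm (vsum m (fun j => vscale (eps j) (y j))) <= lam * nrm (vsum m y).

(* pairing of the functional with coefficients b (i.e. sum_k b_k e_k^star) with x *)
Definition pairing (n : nat) (b x : vec) : R := sumR n (fun k => b k * x k).

Definition is_dualnorm (n : nat) (nrm : vec -> R) (b : vec) (r : R) : Prop :=
  is_lub (fun t => exists x : vec, nrm x <= 1 /\ t = Rabs (pairing n b x)) r.

Definition ubc_bound (n : nat) (nrm : vec -> R) (P : nat -> Prop) (K : R) : Prop :=
  forall (a eps : vec) (r s : R),
    (forall k, ~ P k -> a k = 0) ->
    (forall k, P k -> is_sign (eps k)) ->
    is_dualnorm n nrm (fun k => eps k * a k) r ->
    is_dualnorm n nrm a s ->
    r <= K * s.

Definition ubc_is (n : nat) (nrm : vec -> R) (P : nat -> Prop) (mu : R) : Prop :=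
  ubc_bound n nrm P mu /\ (forall K, ubc_bound n nrm P K -> mu <= K).

Definition odd_idx (n : nat) (k : nat) : Prop := (1 <= k <= n)%nat /\ Nat.odd k = true.
Definition all_idx (n : nat) (k : nat) : Prop := (1 <= k <= n)%nat.

(* Main.v *)
Require Import Defs.
From Stdlib Require Import Reals Lra Lia FunctionalExtensionality ClassicalEpsilon Classical.
Open Scope R_scope.

Lemma sumR_ext n f g : (forall k, (1 <= k <= n)%nat -> f k = g k) -> sumR n f = sumR n g.
Proof. induction n; simpl; intros H; auto. rewrite IHn by (intros; apply H; lia). rewrite H by lia. auto. Qed.

Lemma sumR_add n f g : sumR n (fun k => f k + g k) = sumR n f + sumR n g.
Proof. induction n; simpl; [lra|]. rewrite IHn; lra. Qed.

Lemma sumR_scale n c f : sumR n (fun k => c * f k) = c * sumR n f.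
Proof. induction n; simpl; [lra|]. rewrite IHn; lra. Qed.

Lemma sumR_le n f g : (forall k, (1 <= k <= n)%nat -> f k <= g k) -> sumR n f <= sumR n g.
Proof. induction n; simpl; intros H; [lra|]. assert (f (S n) <= g (S n)) by (apply H; lia).
 assert (sumR n f <= sumR n g) by (apply IHn; intros; apply H; lia). lra. Qed.

Lemma sumR_abs n f : Rabs (sumR n f) <= sumR n (fun k => Rabs (f k)).
Proof. induction n; simpl. rewrite Rabs_R0; lra.
 eapply Rle_trans; [apply Rabs_triang|]. lra. Qed.

Lemma sumR_nonneg n f : (forall k, (1 <= k <= n)%nat -> 0 <= f k) -> 0 <= sumR n f.
Proof. intros H. replace 0 with (sumR n (fun _ => 0)). apply sumR_le; auto.
 clear H; induction n; simpl; auto; lra. Qed.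

Lemma pairing_add n b x y : pairing n b (vadd x y) = pairing n b x + pairing n b y.
Proof. unfold pairing, vadd. rewrite <- sumR_add. apply sumR_ext; intros; ring. Qed.

Lemma pairing_scale n b c x : pairing n b (vscale c x) = c * pairing n b x.
Proof. unfold pairing, vscale. rewrite <- sumR_scale. apply sumR_ext; intros; ring. Qed.

Definition agree (n : nat) (x y : vec) := forall k, (1 <= k <= n)%nat -> x k = y k.

Definition sublin (n : nat) (p : vec -> R) : Prop :=
  (forall x y, agree n x y -> p x = p y) /\
  (forall x y, p (vadd x y) <= p x + p y) /\
  (forall c x, 0 <= c -> p (vscale c x) = c * p x).

Definition zv : vec := fun _ => 0.

Lemma sublin_zero n p : sublin n p -> p zv = 0.
Proof. intros [_ [_ H]]. replace zv with (vscale 0 zv). rewrite H; lra.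
 extensionality k; unfold vscale, zv; ring. Qed.

Lemma sublin_lin_lb n p v t : sublin n p -> t * p v <= p (vscale t v).
Proof. intros Hp. destruct (Rle_dec 0 t).
 - destruct Hp as [_ [_ H]]. rewrite H; lra.
 - assert (H0 : p zv = 0) by (eapply sublin_zero; eauto).
   destruct Hp as [_ [Ht H]].
   assert (E: zv = vadd (vscale t v) (vscale (-t) v)) by (extensionality k; unfold zv, vadd, vscale; ring).
   specialize (Ht (vscale t v) (vscale (-t) v)). rewrite <- E in Ht. rewrite (H (-t) v) in Ht by lra. lra. Qed.

Definition lubE (E : R -> Prop) : R := epsilon (inhabits 0) (fun m => is_lub E m).
Lemma lubE_spec E : bound E -> (exists x, E x) -> is_lub E (lubE E).
Proof. intros Hb He. unfold lubE. apply epsilon_spec. destruct (completeness E Hb He) as [m Hm]. eauto. Qed.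

Definition infq (p : vec -> R) (v : vec) (c : R) (x : vec) : R :=
  - lubE (fun u => exists t, u = -(p (vadd x (vscale t v)) - t * c)).

Section Inf.
Variables (n : nat) (p : vec -> R) (v : vec) (c : R).
Hypothesis Hsp : sublin n p.
Hypothesis Hc : forall t, t * c <= p (vscale t v).

Lemma infq_spec x : is_lub (fun u => exists t, u = -(p (vadd x (vscale t v)) - t * c)) (- infq p v c x).
Proof. unfold infq. rewrite Ropp_involutive. apply lubE_spec.
 - exists (p (vscale (-1) x)). intros u [t ->].
   destruct Hsp as [_ [Ht _]]. specialize (Hc t).
   specialize (Ht (vadd x (vscale t v)) (vscale (-1) x)).
   replace (vadd (vadd x (vscale t v)) (vscale (-1) x)) with (vscale t v) in Ht
     by (extensionality k; unfold vadd, vscale; ring). lra.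
 - eexists; exists 0; reflexivity. Qed.

Lemma infq_lb x t : infq p v c x <= p (vadd x (vscale t v)) - t * c.
Proof. destruct (infq_spec x) as [H _]. assert (H1 := H _ (ex_intro _ t eq_refl)). lra. Qed.

Lemma infq_glb x L : (forall t, L <= p (vadd x (vscale t v)) - t * c) -> L <= infq p v c x.
Proof. intros HL. destruct (infq_spec x) as [_ H]. assert (- infq p v c x <= - L); [|lra].
 apply H. intros u [t ->]. specialize (HL t). lra. Qed.

Lemma infq_le_p x : infq p v c x <= p x.
Proof. eapply Rle_trans; [apply (infq_lb x 0)|].
 replace (vadd x (vscale 0 v)) with x by (extensionality k; unfold vadd, vscale; ring). lra. Qed.

Lemma infq_zero : infq p v c zv = 0.
Proof. apply Rle_antisym.
 - eapply Rle_trans; [apply infq_le_p|]. rewrite (sublin_zero n p Hsp); lra.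
 - apply infq_glb. intros t. replace (vadd zv (vscale t v)) with (vscale t v)
     by (extensionality k; unfold vadd, vscale, zv; ring). specialize (Hc t). lra. Qed.

Lemma infq_shift x s : infq p v c (vadd x (vscale s v)) = infq p v c x + s * c.
Proof. apply Rle_antisym.
 - assert (infq p v c (vadd x (vscale s v)) - s * c <= infq p v c x); [|lra].
   apply infq_glb. intros u. assert (H := infq_lb (vadd x (vscale s v)) (u - s)).
   replace (vadd (vadd x (vscale s v)) (vscale (u - s) v)) with (vadd x (vscale u v)) in H
     by (extensionality k; unfold vadd, vscale; ring). lra.
 - assert (infq p v c x <= infq p v c (vadd x (vscale s v)) - s * c); [|lra].
   assert (infq p v c x + s * c <= infq p v c (vadd x (vscale s v))); [|lra].
   apply infq_glb. intros t. assert (H := infq_lb x (s + t)).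
   replace (vadd (vadd x (vscale s v)) (vscale t v)) with (vadd x (vscale (s + t) v))
     by (extensionality k; unfold vadd, vscale; ring). lra.
Qed.

Lemma infq_sublin : sublin n (infq p v c).
Proof. destruct Hsp as [Ha [Ht Hh]]. split; [|split].
 - assert (forall x y, agree n x y -> infq p v c x <= infq p v c y).
   { intros x y Hxy. apply infq_glb. intros t.
     rewrite <- (Ha (vadd x (vscale t v))). apply infq_lb.
     intros k Hk. unfold vadd. rewrite (Hxy k Hk). auto. }
   intros x y Hxy. apply Rle_antisym; apply H; auto. intros k Hk; symmetry; auto.
 - intros x y.
   assert (forall t, infq p v c (vadd x y) - (p (vadd y (vscale t v)) - t * c) <= infq p v c x).
   { intros t. apply infq_glb. intros s.
     assert (H1 := infq_lb (vadd x y) (s + t)).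
     assert (H2 := Ht (vadd x (vscale s v)) (vadd y (vscale t v))).
     replace (vadd (vadd x (vscale s v)) (vadd y (vscale t v))) with (vadd (vadd x y) (vscale (s + t) v)) in H2
       by (extensionality k; unfold vadd, vscale; ring). lra. }
   assert (infq p v c (vadd x y) - infq p v c x <= infq p v c y); [|lra].
   apply infq_glb. intros t. specialize (H t). lra.
 - intros l x Hl. destruct (Req_dec l 0) as [->|Hl0].
   + replace (vscale 0 x) with zv by (extensionality k; unfold vscale, zv; ring).
     rewrite infq_zero; ring.
   + apply Rle_antisym.
     * assert (infq p v c (vscale l x) / l <= infq p v c x).
       { apply infq_glb. intros t. assert (H := infq_lb (vscale l x) (l * t)).
         replace (vadd (vscale l x) (vscale (l * t) v)) with (vscale l (vadd x (vscale t v))) in H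
           by (extensionality k; unfold vadd, vscale; ring).
         rewrite Hh in H by lra. apply (Rmult_le_reg_l l); [lra|].
         unfold Rdiv. replace (l * (infq p v c (vscale l x) * / l)) with (infq p v c (vscale l x)) by (field; lra). lra. }
       apply (Rmult_le_compat_l l) in H; [|lra]. unfold Rdiv in H.
       replace (l * (infq p v c (vscale l x) * / l)) with (infq p v c (vscale l x)) in H by (field; lra). lra.
     * apply infq_glb. intros t. assert (H := infq_lb x (t / l)).
       assert (H' : vscale l (vadd x (vscale (t / l) v)) = vadd (vscale l x) (vscale t v))
         by (extensionality k; unfold vadd, vscale; field; lra).
       rewrite <- H', Hh by lra. apply (Rmult_le_compat_l l) in H; [|lra].
       replace (l * (p (vadd x (vscale (t / l) v)) - t / l * c)) with (l * p (vadd x (vscale (t / l) v)) - t * c) in H by (field; lra).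
       lra.
Qed.
End Inf.

Definition upd (x : vec) (m : nat) (t : R) : vec := fun k => if Nat.eqb k m then t else x k.
Definition unitv (m : nat) : vec := fun k => if Nat.eqb k m then 1 else 0.

Lemma dom n : forall p, sublin n p -> exists b : vec, forall x, pairing n b x <= p x.
Proof.
 induction n as [|n IH]; intros p Hp.
 - exists zv. intros x. unfold pairing; simpl.
   assert (H0 := sublin_zero 0 p Hp).
   destruct Hp as [Ha _]. rewrite (Ha x zv) by (intros k Hk; lia). lra.
 - set (e := unitv (S n)). set (c := p e).
   assert (Hc : forall t, t * c <= p (vscale t e)) by (intros; apply (sublin_lin_lb (S n)); auto).
   assert (Hq := infq_sublin (S n) p e c Hp Hc).
   set (q' := fun x => infq p e c (upd x (S n) 0)).
   assert (Hq' : sublin n q').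
   { destruct Hq as [Ha [Ht Hh]]. split; [|split]; unfold q'.
     - intros x y Hxy. apply Ha. intros k Hk. unfold upd. destruct (Nat.eqb_spec k (S n)); auto. apply Hxy; lia.
     - intros x y. eapply Rle_trans; [|apply Ht]. right. f_equal. extensionality k; unfold upd, vadd.
       destruct (Nat.eqb k (S n)); ring.
     - intros l x Hl. rewrite <- Hh by auto. f_equal. extensionality k; unfold upd, vscale.
       destruct (Nat.eqb k (S n)); ring. }
   destruct (IH q' Hq') as [b' Hb'].
   exists (fun k => if Nat.eqb k (S n) then c else b' k).
   intros x. unfold pairing; simpl. rewrite Nat.eqb_refl.
   rewrite (sumR_ext n _ (fun k => b' k * x k)).
   2:{ intros k Hk. destruct (Nat.eqb_spec k (S n)); [lia|auto]. }
   specialize (Hb' x). unfold q' in Hb'.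
   assert (E : x = vadd (upd x (S n) 0) (vscale (x (S n)) e)).
   { extensionality k; unfold vadd, vscale, upd, e, unitv. destruct (Nat.eqb_spec k (S n)); subst; ring. }
   assert (H1 := infq_shift (S n) p e c Hp Hc (upd x (S n) 0) (x (S n))).
   rewrite <- E in H1. assert (H2 := infq_le_p (S n) p e c Hp Hc x).
   unfold pairing in Hb'. lra.
Qed.

Lemma norming n p z : sublin n p -> exists b : vec, (forall x, pairing n b x <= p x) /\ pairing n b z = p z.
Proof. intros Hp.
 assert (Hc : forall t, t * p z <= p (vscale t z)) by (intros; apply (sublin_lin_lb n); auto).
 destruct (dom n _ (infq_sublin n p z (p z) Hp Hc)) as [b Hb].
 exists b. split.
 - intros x. eapply Rle_trans; [apply Hb|]. apply (infq_le_p n); auto.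
 - assert (H1 := Hb (vscale (-1) z)). rewrite pairing_scale in H1.
   assert (H2 := infq_shift n p z (p z) Hp Hc zv (-1)).
   replace (vadd zv (vscale (-1) z)) with (vscale (-1) z) in H2 by (extensionality k; unfold vadd, zv, vscale; ring).
   rewrite (infq_zero n) in H2 by auto.
   assert (H3 := Hb z). assert (H4 := infq_le_p n p z (p z) Hp Hc z). lra.
Qed.

Lemma Rabs_m1 : Rabs (-1) = 1.
Proof. rewrite Rabs_left; lra. Qed.

Lemma sumR_ge_term m f k : (forall j, (1 <= j <= m)%nat -> 0 <= f j) -> (1 <= k <= m)%nat -> f k <= sumR m f.
Proof. induction m; intros H Hk; [lia|]. simpl.
 assert (0 <= sumR m f) by (apply sumR_nonneg; intros; apply H; lia).
 destruct (Nat.eq_dec k (S m)) as [->|]. lra.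
 assert (0 <= f (S m)) by (apply H; lia). specialize (IHm ltac:(intros; apply H; lia) ltac:(lia)). lra. Qed.

Section Norm.
Variables (n : nat) (nrm : vec -> R).
Hypothesis Hn : is_norm n nrm.

Lemma nrm_agree x y : agree n x y -> nrm x = nrm y.
Proof. destruct Hn as [H _]. apply H. Qed.
Lemma nrm_scale c x : nrm (vscale c x) = Rabs c * nrm x.
Proof. destruct Hn as [_ [_ [H _]]]. apply H. Qed.
Lemma nrm_tri x y : nrm (vadd x y) <= nrm x + nrm y.
Proof. destruct Hn as [_ [_ [_ H]]]. apply H. Qed.
Lemma nrm_zv : nrm zv = 0.
Proof. replace zv with (vscale 0 zv) by (extensionality k; unfold vscale, zv; ring).
 rewrite nrm_scale, Rabs_R0; ring. Qed.
Lemma nrm_nonneg x : 0 <= nrm x.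
Proof. assert (H := nrm_tri x (vscale (-1) x)).
 replace (vadd x (vscale (-1) x)) with zv in H by (extensionality k; unfold vadd, vscale, zv; ring).
 rewrite nrm_zv, nrm_scale in H. rewrite Rabs_m1 in H. lra. Qed.
Lemma nrm_eq0 x : nrm x = 0 -> forall k, (1 <= k <= n)%nat -> x k = 0.
Proof. destruct Hn as [_ [H _]]. apply H. Qed.

Lemma sublin_nrm : sublin n nrm.
Proof. split; [|split]. apply nrm_agree. apply nrm_tri.
 intros c x Hc. rewrite nrm_scale, Rabs_pos_eq; auto. Qed.

Lemma norming_nrm z : exists b, (forall x, Rabs (pairing n b x) <= nrm x) /\ pairing n b z = nrm z.
Proof. destruct (norming n nrm z sublin_nrm) as [b [H1 H2]]. exists b; split; auto.
 intros x. apply Rabs_le. split; auto. assert (H := H1 (vscale (-1) x)).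
 rewrite pairing_scale, nrm_scale, Rabs_m1 in H. lra. Qed.

Definition trunc (j : nat) (d : vec) : vec := fun k => if Nat.leb k j then d k else 0.

Lemma nrm_trunc d j : nrm (trunc j d) <= sumR j (fun k => Rabs (d k) * nrm (unitv k)).
Proof. induction j; simpl.
 - rewrite (nrm_agree _ zv), nrm_zv; [lra|]. intros k Hk. unfold trunc, zv.
   destruct (Nat.leb_spec k 0); auto; lia.
 - replace (trunc (S j) d) with (vadd (trunc j d) (vscale (d (S j)) (unitv (S j)))).
   + eapply Rle_trans; [apply nrm_tri|]. rewrite nrm_scale. lra.
   + extensionality k; unfold vadd, vscale, trunc, unitv.
     destruct (Nat.leb_spec k j); destruct (Nat.leb_spec k (S j)); destruct (Nat.eqb_spec k (S j)); try lia; subst; ring.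
Qed.

Definition Lnrm := sumR n (fun k => nrm (unitv k)).

Lemma Lnrm_nonneg : 0 <= Lnrm.
Proof. apply sumR_nonneg; intros; apply nrm_nonneg. Qed.

Lemma unit_le_L k : (1 <= k <= n)%nat -> nrm (unitv k) <= Lnrm.
Proof. unfold Lnrm. intros Hk. apply (sumR_ge_term n (fun k => nrm (unitv k))); auto. intros; apply nrm_nonneg. Qed.

Lemma nrm_le_l1 d : nrm d <= Lnrm * sumR n (fun k => Rabs (d k)).
Proof. rewrite <- (nrm_agree (trunc n d)).
 - eapply Rle_trans; [apply nrm_trunc|]. rewrite <- sumR_scale. apply sumR_le.
   intros k Hk. assert (H := unit_le_L k Hk). assert (0 <= Rabs (d k)) by apply Rabs_pos.
   rewrite (Rmult_comm Lnrm). apply Rmult_le_compat_l; auto.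
 - intros k Hk. unfold trunc. destruct (Nat.leb_spec k n); auto; lia.
Qed.

Lemma nrm_lip x y : Rabs (nrm x - nrm y) <= Lnrm * sumR n (fun k => Rabs (x k - y k)).
Proof. assert (H1 := nrm_le_l1 (vadd x (vscale (-1) y))).
 assert (H2 := nrm_le_l1 (vadd y (vscale (-1) x))).
 assert (E1 : x = vadd (vadd x (vscale (-1) y)) y) by (extensionality k; unfold vadd, vscale; ring).
 assert (E2 : y = vadd (vadd y (vscale (-1) x)) x) by (extensionality k; unfold vadd, vscale; ring).
 assert (T1 := nrm_tri (vadd x (vscale (-1) y)) y). rewrite <- E1 in T1.
 assert (T2 := nrm_tri (vadd y (vscale (-1) x)) x). rewrite <- E2 in T2.
 assert (S : sumR n (fun k => Rabs (vadd y (vscale (-1) x) k)) = sumR n (fun k => Rabs (x k - y k))).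
 { apply sumR_ext; intros; unfold vadd, vscale. rewrite <- Rabs_Ropp. f_equal; ring. }
 assert (S' : sumR n (fun k => Rabs (vadd x (vscale (-1) y) k)) = sumR n (fun k => Rabs (x k - y k))).
 { apply sumR_ext; intros; unfold vadd, vscale. f_equal; ring. }
 rewrite S in H2. rewrite S' in H1. apply Rabs_le; lra.
Qed.
End Norm.

Lemma lip_cont (f : R -> R) L : 0 <= L -> (forall s t, Rabs (f s - f t) <= L * Rabs (s - t)) ->
  forall x, continuity_pt f x.
Proof. intros HL Hf x. unfold continuity_pt, continue_in, limit1_in, limit_in. intros eps He.
 exists (eps / (L + 1)). split. apply Rdiv_lt_0_compat; lra.
 intros y [_ Hy]. simpl in *. unfold R_dist in *.
 eapply Rle_lt_trans; [apply Hf|].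
 destruct (Req_dec L 0) as [->|]. lra.
 apply Rlt_le_trans with (L * (eps / (L + 1))). apply Rmult_lt_compat_l; lra.
 unfold Rdiv. rewrite <- Rmult_assoc. apply Rmult_le_reg_r with (L + 1); [lra|].
 rewrite Rmult_assoc, Rinv_l by lra. nra. Qed.

Lemma Rabs_le_inv a b : Rabs a <= b -> -b <= a <= b.
Proof. unfold Rabs; destruct (Rcase_abs a); lra. Qed.

Definition inbox (m : nat) (x : vec) := forall k, (1 <= k <= m)%nat -> -1 <= x k <= 1.

Lemma sumR_upd m x y t s :
  sumR (S m) (fun k => Rabs (upd x (S m) t k - upd y (S m) s k)) = sumR m (fun k => Rabs (x k - y k)) + Rabs (t - s).
Proof. simpl. unfold upd at 3 4. rewrite Nat.eqb_refl. f_equal. apply sumR_ext. intros k Hk.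
 unfold upd. destruct (Nat.eqb_spec k (S m)); [lia|auto]. Qed.

Lemma boxmin m : forall (F : vec -> R) L, 0 <= L ->
  (forall x y, Rabs (F x - F y) <= L * sumR m (fun k => Rabs (x k - y k))) ->
  exists x0, inbox m x0 /\ forall x, inbox m x -> F x0 <= F x.
Proof.
 induction m as [|m IH]; intros F L HL HF.
 - exists zv. split. intros k Hk; lia. intros x _. specialize (HF zv x). simpl in HF.
   rewrite Rmult_0_r in HF. apply Rabs_le_inv in HF. lra.
 - assert (Hfx : forall x, exists t, (forall c, -1 <= c <= 1 -> F (upd x (S m) t) <= F (upd x (S m) c)) /\ -1 <= t <= 1).
   { intros x. apply (continuity_ab_min (fun t => F (upd x (S m) t))). lra.
     intros c _. apply (lip_cont _ L HL). intros s t. eapply Rle_trans; [apply HF|].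
     rewrite sumR_upd. rewrite (sumR_ext m _ (fun _ => 0)).
     replace (sumR m (fun _ => 0)) with 0 by (clear; induction m; simpl; lra). lra.
     intros; rewrite Rminus_diag, Rabs_R0; auto. }
   set (ts := fun x => proj1_sig (constructive_indefinite_description _ (Hfx x))).
   assert (Hts : forall x, (forall c, -1 <= c <= 1 -> F (upd x (S m) (ts x)) <= F (upd x (S m) c)) /\ -1 <= ts x <= 1).
   { intros x. unfold ts. destruct (constructive_indefinite_description _ (Hfx x)); auto. }
   set (G := fun x => F (upd x (S m) (ts x))).
   assert (HG1 : forall x y, G x <= G y + L * sumR m (fun k => Rabs (x k - y k))).
   { intros x y. unfold G. destruct (Hts x) as [H1 _]. destruct (Hts y) as [_ H2].
     specialize (H1 (ts y) H2). specialize (HF (upd x (S m) (ts y)) (upd y (S m) (ts y))).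
     rewrite sumR_upd, Rminus_diag, Rabs_R0, Rplus_0_r in HF. apply Rabs_le_inv in HF. lra. }
   assert (HG : forall x y, Rabs (G x - G y) <= L * sumR m (fun k => Rabs (x k - y k))).
   { intros x y. apply Rabs_le. split; [|specialize (HG1 x y); lra].
     specialize (HG1 y x). rewrite (sumR_ext m _ (fun k => Rabs (x k - y k))) in HG1. lra.
     intros; rewrite <- Rabs_Ropp; f_equal; ring. }
   destruct (IH G L HL HG) as [x0 [Hx0 Hmin]].
   exists (upd x0 (S m) (ts x0)). split.
   + intros k Hk. unfold upd. destruct (Nat.eqb_spec k (S m)). apply Hts. apply Hx0; lia.
   + intros x Hx. fold (G x0). eapply Rle_trans. apply Hmin. intros k Hk. apply (Hx k). lia.
     unfold G. destruct (Hts x) as [H1 _]. eapply Rle_trans. apply (H1 (x (S m))). apply Hx; lia.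
     right. f_equal. extensionality k. unfold upd. destruct (Nat.eqb_spec k (S m)); subst; auto.
Qed.

Lemma maxc n x : (1 <= n)%nat -> exists j, (1 <= j <= n)%nat /\ forall k, (1 <= k <= n)%nat -> Rabs (x k) <= Rabs (x j).
Proof. induction n; intros Hn; [lia|]. destruct (Nat.eq_dec n 0) as [->|Hn0].
 - exists 1%nat. split; [lia|]. intros k Hk. replace k with 1%nat by lia; lra.
 - destruct (IHn ltac:(lia)) as [j [Hj Hm]].
   destruct (Rle_dec (Rabs (x j)) (Rabs (x (S n)))).
   + exists (S n). split; [lia|]. intros k Hk. destruct (Nat.eq_dec k (S n)) as [->|]; [lra|].
     specialize (Hm k ltac:(lia)); lra.
   + exists j. split; [lia|]. intros k Hk. destruct (Nat.eq_dec k (S n)) as [->|]; [lra|].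
     apply Hm; lia.
Qed.

Section Equiv.
Variables (n : nat) (nrm : vec -> R).
Hypothesis Hn : is_norm n nrm.

Lemma coord_pos j : (1 <= j <= n)%nat -> exists c, 0 < c /\
  forall x, (forall k, (1 <= k <= n)%nat -> Rabs (x k) <= Rabs (x j)) -> c * Rabs (x j) <= nrm x.
Proof. intros Hj.
 set (F := fun y => nrm (upd y j 1)).
 assert (HF : forall x y, Rabs (F x - F y) <= Lnrm n nrm * sumR n (fun k => Rabs (x k - y k))).
 { intros x y. unfold F. eapply Rle_trans; [apply (nrm_lip n nrm Hn)|].
   apply Rmult_le_compat_l. apply (Lnrm_nonneg n nrm Hn). apply sumR_le. intros k Hk. unfold upd.
   destruct (Nat.eqb k j). rewrite Rminus_diag, Rabs_R0; apply Rabs_pos. lra. }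
 destruct (boxmin n F _ (Lnrm_nonneg n nrm Hn) HF) as [y0 [Hy0 Hmin]].
 exists (F y0). split.
 - destruct (Rle_lt_or_eq_dec 0 (F y0)) as [|E]. apply (nrm_nonneg n nrm Hn). auto.
   exfalso. symmetry in E. assert (H := nrm_eq0 n nrm Hn _ E j Hj). unfold upd in H.
   rewrite Nat.eqb_refl in H. lra.
 - intros x Hx. destruct (Req_dec (x j) 0) as [E|E].
   + rewrite E, Rabs_R0, Rmult_0_r. apply (nrm_nonneg n nrm Hn).
   + set (y := vscale (/ x j) x).
     assert (Hy : inbox n y).
     { intros k Hk. apply Rabs_le_inv. unfold y, vscale. rewrite Rabs_mult, Rabs_inv.
       specialize (Hx k Hk). assert (0 < Rabs (x j)) by (apply Rabs_pos_lt; auto).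
       apply Rmult_le_reg_l with (Rabs (x j)); auto. rewrite <- Rmult_assoc, Rinv_r; lra. }
     specialize (Hmin y Hy). unfold F at 2 in Hmin.
     replace (upd y j 1) with y in Hmin.
     2:{ extensionality k. unfold upd, y, vscale. destruct (Nat.eqb_spec k j); subst; auto. field; auto. }
     unfold y in Hmin. rewrite (nrm_scale n nrm Hn), Rabs_inv in Hmin by auto.
     assert (0 < Rabs (x j)) by (apply Rabs_pos_lt; auto).
     apply Rmult_le_compat_l with (r := Rabs (x j)) in Hmin; [|lra].
     rewrite <- Rmult_assoc, Rinv_r in Hmin by lra. lra.
Qed.

Lemma coord_bound : exists C, 0 <= C /\ forall x k, (1 <= k <= n)%nat -> Rabs (x k) <= C * nrm x.
Proof.
 assert (H : forall m, (m <= n)%nat -> exists C, 0 <= C /\ forall j, (1 <= j <= m)%nat -> forall x,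
    (forall k, (1 <= k <= n)%nat -> Rabs (x k) <= Rabs (x j)) -> Rabs (x j) <= C * nrm x).
 { induction m; intros Hm.
   - exists 0. split; [lra|]. intros; lia.
   - destruct (IHm ltac:(lia)) as [C [HC HCm]]. destruct (coord_pos (S m) ltac:(lia)) as [c [Hc Hcx]].
     exists (C + / c). split. assert (0 < / c) by (apply Rinv_0_lt_compat; auto). lra.
     intros j Hj x Hx. assert (0 <= nrm x) by (apply (nrm_nonneg n nrm Hn)).
     assert (0 < / c) by (apply Rinv_0_lt_compat; auto).
     destruct (Nat.eq_dec j (S m)) as [->|].
     + specialize (Hcx x Hx). apply Rmult_le_compat_l with (r := / c) in Hcx; [|lra].
       rewrite <- Rmult_assoc, Rinv_l in Hcx by lra. nra.
     + specialize (HCm j ltac:(lia) x Hx). nra. }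
 destruct (Nat.eq_dec n 0) as [->|Hn0].
 - exists 0. split; [lra|]. intros; lia.
 - destruct (H n (le_n n)) as [C [HC HCn]]. exists C. split; auto. intros x k Hk.
   destruct (maxc n x ltac:(lia)) as [j [Hj Hmx]]. eapply Rle_trans. apply Hmx; auto. apply HCn; auto.
Qed.

Lemma dual_exists b : exists s, is_dualnorm n nrm b s.
Proof. destruct coord_bound as [C [HC HCx]].
 set (E := fun t => exists x : vec, nrm x <= 1 /\ t = Rabs (pairing n b x)).
 assert (Hb : bound E).
 { exists (sumR n (fun k => Rabs (b k)) * C). intros t [x [Hx ->]].
   eapply Rle_trans; [apply sumR_abs|]. rewrite Rmult_comm, <- sumR_scale. apply sumR_le.
   intros k Hk. rewrite Rabs_mult. specialize (HCx x k Hk).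
   assert (0 <= Rabs (b k)) by apply Rabs_pos. assert (0 <= nrm x) by (apply (nrm_nonneg n nrm Hn)). assert (Rabs (x k) <= C) by nra. rewrite (Rmult_comm C). apply Rmult_le_compat_l; auto. }
 assert (He : exists t, E t). { exists (Rabs (pairing n b zv)); exists zv; split; auto. rewrite (nrm_zv n nrm Hn); lra. }
 destruct (completeness E Hb He) as [s Hs]. exists s. exact Hs.
Qed.

Lemma dual_nonneg b s : is_dualnorm n nrm b s -> 0 <= s.
Proof. intros [H _]. eapply Rle_trans; [|apply H]. apply (Rabs_pos (pairing n b zv)).
 exists zv. split; auto. rewrite (nrm_zv n nrm Hn); lra. Qed.

Lemma dual_bound b s x : is_dualnorm n nrm b s -> Rabs (pairing n b x) <= s * nrm x.
Proof. intros Hs. assert (H0 := dual_nonneg b s Hs). destruct Hs as [Hs _].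
 destruct (Req_dec (nrm x) 0) as [E|E].
 - rewrite E, Rmult_0_r. unfold pairing. rewrite (sumR_ext n _ (fun _ => 0)).
   replace (sumR n (fun _ => 0)) with 0 by (clear; induction n; simpl; lra). rewrite Rabs_R0; lra.
   intros k Hk. rewrite (nrm_eq0 n nrm Hn x E k Hk). ring.
 - assert (Hp : 0 < nrm x) by (destruct (nrm_nonneg n nrm Hn x); lra).
   assert (H := Hs (Rabs (pairing n b (vscale (/ nrm x) x)))).
   rewrite pairing_scale, Rabs_mult, Rabs_pos_eq in H by (left; apply Rinv_0_lt_compat; auto).
   assert (H1 : / nrm x * Rabs (pairing n b x) <= s).
   { apply H. exists (vscale (/ nrm x) x). split; auto.
     - rewrite (nrm_scale n nrm Hn), Rabs_pos_eq. rewrite Rinv_l; lra. left; apply Rinv_0_lt_compat; auto.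
     - rewrite pairing_scale, Rabs_mult, (Rabs_pos_eq (/ nrm x)); [reflexivity|]. apply Rlt_le, Rinv_0_lt_compat; auto. }
   apply Rmult_le_compat_l with (r := nrm x) in H1; [|lra].
   rewrite <- Rmult_assoc, Rinv_r in H1 by lra. lra.
Qed.
End Equiv.

Lemma odd_cases k : (Nat.odd k = true /\ exists i, k = (2*i+1)%nat) \/ (Nat.odd k = false /\ exists i, k = (2*i)%nat).
Proof. destruct (Nat.Even_or_Odd k) as [[i Hi]|[i Hi]].
 - right. split; [|eauto]. rewrite <- Nat.negb_even, (proj2 (Nat.even_spec k) (ex_intro _ i Hi)). auto.
 - left. split; [|eauto]. apply Nat.odd_spec. exists i; auto. Qed.

Lemma sum_ind m k c : (1 <= k)%nat ->
  sumR m (fun j => if Nat.eqb k (2*j-1) then c else 0) = if (Nat.odd k && Nat.leb k (2*m-1))%bool then c else 0.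
Proof. intros Hk. induction m.
 - simpl. destruct (Nat.odd k); simpl; auto. destruct (Nat.leb_spec k 0); auto; lia.
 - change (sumR (S m) ?f) with (sumR m f + f (S m)). cbv beta. rewrite IHm.
   replace (2 * S m - 1)%nat with (2*m+1)%nat by lia.
   destruct (odd_cases k) as [[Ho [i ->]]|[Ho [i ->]]]; rewrite Ho; rewrite ?Bool.andb_true_l, ?Bool.andb_false_l.
   + destruct (Nat.leb_spec (2*i+1) (2*m-1)); destruct (Nat.leb_spec (2*i+1) (2*m+1));
     destruct (Nat.eqb_spec (2*i+1) (2*m+1)); try lia; lra.
   + destruct (Nat.eqb_spec (2*i) (2*m+1)); try lia; lra.
Qed.

Definition Tv (x : vec) : vec := fun k => (if Nat.odd k then 1 else -1) * x k.

Section Main.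
Variables (N : nat) (nrm : vec -> R).
Let n := (2 * N + 1)%nat.
Hypothesis Hnorm : is_norm n nrm.
Hypothesis Hskip : skipped_unconditional n nrm 1.

Lemma T_bound K : ubc_bound n nrm (all_idx n) K -> forall x, nrm x <= 1 -> nrm (Tv x) <= Rmax K 0.
Proof. intros HK x Hx.
 destruct (norming_nrm n nrm Hnorm (Tv x)) as [g [Hg1 Hg2]].
 set (a := fun k => if (Nat.leb 1 k && Nat.leb k n)%bool then g k else 0).
 set (dl := fun k : nat => if Nat.odd k then 1 else -1).
 destruct (dual_exists n nrm Hnorm a) as [s Hs].
 destruct (dual_exists n nrm Hnorm (fun k => dl k * a k)) as [r Hr].
 assert (Hrs : r <= K * s).
 { apply (HK a dl r s); auto.
   - intros k Hk. unfold a, all_idx in *. destruct (Nat.leb_spec 1 k); destruct (Nat.leb_spec k n); simpl; auto.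
     exfalso; apply Hk; lia.
   - intros k _. unfold dl, is_sign. destruct (Nat.odd k); auto. }
 assert (Hpa : forall y, pairing n a y = pairing n g y).
 { intros y. apply sumR_ext. intros k Hk. unfold a. destruct (Nat.leb_spec 1 k); destruct (Nat.leb_spec k n); simpl; auto; lia. }
 assert (Hs1 : s <= 1).
 { destruct Hs as [_ Hs]. apply Hs. intros t [y [Hy ->]]. rewrite Hpa. eapply Rle_trans; [apply Hg1|]. auto. }
 assert (Hs0 := dual_nonneg n nrm Hnorm _ _ Hs).
 assert (Hr0 := dual_nonneg n nrm Hnorm _ _ Hr).
 assert (E : nrm (Tv x) = pairing n (fun k => dl k * a k) x).
 { rewrite <- Hg2. apply sumR_ext. intros k Hk. unfold a, dl, Tv.
   destruct (Nat.leb_spec 1 k); destruct (Nat.leb_spec k n); try lia; simpl. ring. }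
 assert (Hb := dual_bound n nrm Hnorm _ _ x Hr).
 assert (Hpx : 0 <= nrm x) by apply (nrm_nonneg n nrm Hnorm).
 assert (r * nrm x <= r) by nra.
 rewrite E. apply Rabs_le_inv in Hb.
 assert (K * s <= Rmax K 0).
 { unfold Rmax. destruct (Rle_dec K 0); nra. }
 lra.
Qed.

Lemma odd_bound K : ubc_bound n nrm (all_idx n) K -> ubc_bound n nrm (odd_idx n) ((1 + Rmax K 0) / 2).
Proof. intros HK a eps r s Ha Heps Hr Hs.
 assert (Hs0 := dual_nonneg n nrm Hnorm _ _ Hs).
 destruct Hr as [_ Hr]. apply Hr. intros t [x [Hx ->]].
 set (w := fun k => if Nat.odd k then eps k * x k else 0).
 set (u := fun k => if Nat.odd k then x k else 0).
 assert (E1 : pairing n (fun k => eps k * a k) x = pairing n a w).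
 { apply sumR_ext. intros k Hk. unfold w. destruct (classic (odd_idx n k)) as [Ho|Ho].
   - destruct Ho as [_ Ho]. rewrite Ho. ring.
   - rewrite (Ha k Ho). ring. }
 assert (Hwu : nrm w <= nrm u).
 { set (y := fun (j : nat) (i : nat) => if Nat.eqb i (2*j-1) then x i else 0).
   assert (H := Hskip (N+1)%nat (fun j => 2*j)%nat y (fun j => eps (2*j-1)%nat) eq_refl).
   assert (Hw : nrm (vsum (N + 1) (fun j => vscale (eps (2 * j - 1)%nat) (y j))) = nrm w).
   { apply (nrm_agree n nrm Hnorm). intros k Hk. unfold vsum, vscale, y, w.
     rewrite (sumR_ext _ _ (fun j => if Nat.eqb k (2*j-1) then eps k * x k else 0)).
     - rewrite sum_ind by lia. destruct (Nat.odd k); rewrite ?Bool.andb_true_l, ?Bool.andb_false_l; auto.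
       destruct (Nat.leb_spec k (2*(N+1)-1)); auto. unfold n in Hk; lia.
     - intros j Hj. destruct (Nat.eqb_spec k (2*j-1)); subst; ring. }
   assert (Hu : nrm (vsum (N + 1) y) = nrm u).
   { apply (nrm_agree n nrm Hnorm). intros k Hk. unfold vsum, y, u.
     rewrite sum_ind by lia. destruct (Nat.odd k); rewrite ?Bool.andb_true_l, ?Bool.andb_false_l; auto.
     destruct (Nat.leb_spec k (2*(N+1)-1)); auto. unfold n in Hk; lia. }
   rewrite <- Hw, <- Hu. rewrite <- (Rmult_1_l (nrm (vsum (N+1) y))). apply H.
   - intros j Hj. lia.
   - intros j Hj i Hi. unfold y. destruct (Nat.eqb_spec i (2*j-1)); auto.
     exfalso; apply Hi. unfold n. lia.
   - intros j Hj. apply Heps. split. lia.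
     replace (2*j-1)%nat with (1 + 2*(j-1))%nat by lia. rewrite Nat.odd_add_mul_2. auto. }
 assert (Hu : u = vscale (/2) (vadd x (Tv x))).
 { extensionality k. unfold u, vscale, vadd, Tv. destruct (Nat.odd k); field. }
 assert (HT := T_bound K HK x Hx).
 assert (Hun : nrm u <= (1 + Rmax K 0) / 2).
 { rewrite Hu, (nrm_scale n nrm Hnorm). rewrite Rabs_pos_eq by lra.
   assert (H := nrm_tri n nrm Hnorm x (Tv x)). lra. }
 rewrite E1. eapply Rle_trans. apply (dual_bound n nrm Hnorm _ _ w Hs).
 assert (0 <= nrm w) by apply (nrm_nonneg n nrm Hnorm). 
 rewrite (Rmult_comm _ s). apply Rmult_le_compat_l; auto. lra.
Qed.
End Main.

Theorem lemma5p2 (N : nat) (nrm : vec -> R)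
  (Hnorm : is_norm (2 * N + 1) nrm)
  (Hskip : skipped_unconditional (2 * N + 1) nrm 1)
  (mu : R)
  (Hmu : ubc_is (2 * N + 1) nrm (odd_idx (2 * N + 1)) mu)
  (Hmu1 : 1 < mu) :
  forall K : R, ubc_is (2 * N + 1) nrm (all_idx (2 * N + 1)) K ->
    1 + 2 * (mu - 1) <= K.
Proof. intros K [HK _]. destruct Hmu as [_ Hmin].
 assert (H := Hmin _ (odd_bound N nrm Hnorm Hskip K HK)).
 unfold Rmax in H. destruct (Rle_dec K 0); lra.
Qed.
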